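(* Let $\mathcal A$ be an $n$-DPDA whose input alphabet contains $\star$. If $R$ is an infinite run of $\mathcal A$ reading only stars, then $R(i)$ is a milestone configuration for infinitely many indices $i$.
   Context: Stacks: fix order $n\ge1$, finite stack alphabet $\Gamma$. A $0$-stack is $(\gamma,x)$ with $\gamma\in\Gamma$, $x=(x_n,\dots,x_1)$ a vector of $n$ positive integers (position). For $k\in\{1,\dots,n\}$ a $k$-stack is a finite list $[s_1,\dots,s_m]$ ($m\ge0$) of nonempty $(k-1)$-stacks such that for some $x_n,\dots,x_{k+1}$, every position in $s_i$ has the form $(x_n,\dots,x_{k+1},i,y_{k-1},\dots,y_1)$. The top is at the right; $s^k:s^{k-1}$ appends at the top (right-associative); for $s^r=t^r:t^{r-1}:\dots:t^k$, $\mathrm{top}^k(s^r)=t^k$. Equality of stacks includes positions. For $k<n$, $\mathsf p_{+1}(s^k)$ adds $1$ to the $(n-k)$-th coordinate of all positions. Operations of order $k\ge1$: $\mathsf{pop}^k(s^r:\dots:s^k:s^{k-1})=s^r:\dots:s^k$, defined only if the topmost $k$-stack has at least two $(k-1)$-stacks; $\mathsf{push}^k_\gamma(s^r:\dots:s^0)=s^r:\dots:s^{k+1}:(s^k:\dots:s^0):\mathsf p_{+1}(s^{k-1}:\dots:s^1:(\gamma,x))$ where $s^0=(\gamma',x)$. An $n$-DPDA has transitions determined by state and topmost stack symbol, each either $\mathrm{read}(\vec q)$ ($\vec q:A\to Q$ injective; leads to $(\vec q(a),s)$ for $a\in A$, this step reads $a$) or $(q,op)$ with $op$ a stack operation of order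 $\le n$ (leads to $(q,op(s))$ if defined; reads nothing). Configurations are (state, nonempty $n$-stack). A run is a finite or infinite sequence $R=c_0,c_1,\dots$ with each $c_i$ a successor of $c_{i-1}$; $R(i)=c_i$, $R[i,j]=c_i,\dots,c_j$. The word read is the concatenation of letters read by the steps. History: for a finite run $R$ and a $0$-stack $s^0$ of $R(|R|)$, $\mathrm{hist}(R,s^0)$ is a $0$-stack of $R(0)$: if $|R|=0$ it is $s^0$; if $R=S\circ T$, $|T|=1$, and the last step is a read or a $\mathsf{pop}$, or a $\mathsf{push}^r_\gamma$ with $s^0$ not in the topmost $(r-1)$-stack of $R(|R|)$, it is $\mathrm{hist}(S,s^0)$; if the last step is $\mathsf{push}^r_\gamma$ and $s^0$ is in the topmost $(r-1)$-stack of $R(|R|)$, it is $\mathrm{hist}(S,t^0)$ with $t^0$ equal to $s^0$ with the $(n-r+1)$-th position coordinate decreased by $1$. For a $k$-stack $s^k$, $k\ge1$, $\mathrm{hist}(R,s^k)$ is the $k$-stack of $R(0)$ containing $\mathrm{hist}(R,s^0)$ for all $0$-stacks $s^0$ of $s^k$. A run $R$ is $0$-upper if $\mathrm{hist}(R,\mathrm{top}^0(R(|R|)))=\mathrm{top}^0(R(0))$. Milestone: a configuration $c$ is a milestone if there exist an infinite run $R$ from $c$ reading only stars and an infinite set $I\subseteq\mathbb N$ with $0\in I$ such that $R[i,j]$ is $0$-upper for all $i,j\in I$ with $i\le j$. *)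

(* Defs.v *)
From mathcomp Require Import all_boot.
Set Implicit Arguments.
Unset Strict Implicit.
Unset Printing Implicit Defensive.

(* The TOP of a stack is the
   HEAD of the list (the paper writes the top on the right).  Positions are
   not stored: inside an n-stack the position of every 0-stack is determined
   by the structure (coordinate x_k = index, counted from the bottom starting
   at 1, of the enclosing (k-1)-stack inside its k-stack). *)
Fixpoint stk (G : Type) (k : nat) : Type :=
  if k is k'.+1 then seq (stk G k') else G.

Section Stacks.
Variable G : Type.

Fixpoint ne_stk (k : nat) : stk G k -> bool :=
  match k return stk G k -> bool with
  | 0 => fun _ => true
  | k'.+1 => fun s => (size s != 0) && all (@ne_stk k') s
  end.

Fixpoint top0 (k : nat) : stk G k -> option G :=
  match k return stk G k -> option G with
  | 0 => fun g => Some g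
  | k'.+1 => fun s => if s is t :: _ then @top0 k' t else None
  end.

Fixpoint settop (g : G) (k : nat) : stk G k -> stk G k :=
  match k return stk G k -> stk G k with
  | 0 => fun _ => g
  | k'.+1 => fun s => if s is t :: u then @settop g k' t :: u else s
  end.

Fixpoint popk (r k : nat) : stk G k -> option (stk G k) :=
  match k return stk G k -> option (stk G k) with
  | 0 => fun _ => None
  | k'.+1 => fun s =>
      if r == k'.+1 then
        (if s is _ :: (_ :: _) as u then Some u else None)
      else (if s is t :: u then omap (fun t' => t' :: u) (@popk r k' t)
            else None)
  end.

Fixpoint pushk (r : nat) (g : G) (k : nat) : stk G k -> option (stk G k) :=
  match k return stk G k -> option (stk G k) with
  | 0 => fun _ => None
  | k'.+1 => fun s =>
      if s is t :: u then
        (if r == k'.+1 then Some (@settop g k' t :: t :: u)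
         else omap (fun t' => t' :: u) (@pushk r g k' t))
      else None
  end.

(* position (x_k, ..., x_1) of the topmost 0-stack; indices counted from the
   bottom starting at 1, so the topmost index is the size of the list *)
Fixpoint toppos (k : nat) : stk G k -> seq nat :=
  match k return stk G k -> seq nat with
  | 0 => fun _ => [::]
  | k'.+1 => fun s => if s is t :: _ then size s :: @toppos k' t
                      else 0 :: nseq k' 0
  end.

End Stacks.

Section DPDA.
Variables (n : nat) (Q G A : finType) (star : A).

(* stack operations of order r = i.+1 in {1,...,n} *)
Inductive stack_op : Type :=
  | Pop of 'I_n
  | Push of 'I_n & G.

Definition apply_op (o : stack_op) (s : stk G n) : option (stk G n) :=
  match o with
  | Pop i => popk i.+1 s
  | Push i g => pushk i.+1 g s
  end.

Inductive transition : Type :=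
  | Read of (A -> Q)
  | DoOp of Q & stack_op.

Variable delta : Q -> G -> transition.

Definition config : Type := (Q * stk G n)%type.

Definition valid_config (c : config) : bool := ne_stk c.2.

Definition step (c c' : config) (l : option A) : Prop :=
  match top0 c.2 with
  | None => False
  | Some g =>
      match delta c.1 g with
      | Read f => exists a, l = Some a /\ c' = (f a, c.2)
      | DoOp q o => l = None /\ c'.1 = q /\ apply_op o c.2 = Some c'.2
      end
  end.

Definition reads_star (l : option A) : bool :=
  if l is Some a then a == star else true.

Definition star_run (R : nat -> config) : Prop :=
  forall i, valid_config (R i) /\
            exists l, step (R i) (R i.+1) l /\ reads_star l.

(* history through one step c -> c': maps the position p of a 0-stack of c'
   to the position of a 0-stack of c *)
Definition hist_step (c c' : config) (p : seq nat) : seq nat :=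
  match top0 c.2 with
  | None => p
  | Some g =>
      match delta c.1 g with
      | DoOp _ (Push i _) =>
          (* r = i.+1; the topmost (r-1)-stack is determined by the
             coordinates x_n, ..., x_r, i.e. the first n - i entries *)
          if take (n - i) p == take (n - i) (toppos c'.2)
          then set_nth 0 p (n - i.+1) (nth 0 p (n - i.+1)).-1
          else p
      | _ => p
      end
  end.

Fixpoint hist (R : nat -> config) (i d : nat) (p : seq nat) : seq nat :=
  if d is d'.+1 then hist R i d' (hist_step (R (i + d')) (R (i + d'.+1)) p)
  else p.

Definition upper0 (R : nat -> config) (i j : nat) : Prop :=
  hist R i (j - i) (toppos (R j).2) = toppos (R i).2.

Definition infinite_set (I : nat -> Prop) : Prop :=
  forall m, exists i, m <= i /\ I i.

Definition milestone (c : config) : Prop :=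
  exists R : nat -> config, R 0 = c /\ star_run R /\
    exists I : nat -> Prop, infinite_set I /\ I 0 /\
      forall i j, I i -> I j -> i <= j -> upper0 R i j.

End DPDA.

(* Main.v *)
Require Import Defs.
From mathcomp Require Import all_boot.
From Stdlib Require Import Classical.
Set Implicit Arguments. Unset Strict Implicit.


Fixpoint vpos (G : Type) (k : nat) : stk G k -> seq nat -> bool :=
  match k return stk G k -> seq nat -> bool with
  | 0 => fun _ p => nilp p
  | k'.+1 => fun s p =>
      if p is x :: p' then
        (0 < x <= size s) &&
        (if drop (size s - x) s is t :: _ then @vpos G k' t p' else false)
      else false
  end.

Lemma size_toppos (G : Type) k (s : stk G k) : size (toppos s) = k.
Proof.
elim: k s => [//|k IH] [|t u] /=; first by rewrite size_nseq.
by rewrite IH.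
Qed.

Lemma vpos_size (G : Type) k (s : stk G k) p : vpos s p -> size p = k.
Proof.
elim: k s p => [s [|//] //|k IH s [//|x p]] /=.
case/andP=> _; case: (drop _ s) => [//|t _] /IH ->. by [].
Qed.

Lemma vpos_top (G : Type) k (s : stk G k) : ne_stk s -> vpos s (toppos s).
Proof.
elim: k s => [//|k IH] [//|t u] /= /andP [nt _].
by rewrite ltnS leqnn subnn /= IH.
Qed.

Lemma vpos_bound (G : Type) k (s : stk G k) p m :
  vpos s p -> take m p = take m (toppos s) -> nth 0 p m <= nth 0 (toppos s) m.
Proof.
elim: k s p m => [s [|//] m|k IH s [//|x p] m] /=.
  by rewrite nth_nil.
case/andP=> /andP [x0 xs]; case: s xs => [|t u]; first by rewrite leqn0 => /eqP E; rewrite E in x0.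
move=> xs Hd; case: m => [|m] //=.
case=> Ex Ht. move: Hd. rewrite Ex subnn /= => vt. exact: IH vt Ht.
Qed.

Lemma vpos_settop (G : Type) (g : G) k (t : stk G k) p : vpos (settop g t) p = vpos t p.
Proof.
elim: k t p => [//|k IH] [|t u] [|x p] //=.
case: ((size u).+1 - x) => [|d] /=; by [rewrite IH|].
Qed.

Lemma toppos_settop (G : Type) (g : G) k (t : stk G k) : toppos (settop g t) = toppos t.
Proof. by elim: k t => [//|k IH] [|t u] //=; rewrite IH. Qed.

Lemma vpos_pop (G : Type) r k (s s' : stk G k) p :
  popk r s = Some s' -> vpos s' p -> vpos s p.
Proof.
elim: k s s' p => [//|k IH] s s' p /=.
case: eqP => _.
  case: s => [|a [|b c]] // [<-]; case: p => [//|x p] /=.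
  case/andP=> H1 H; case/andP: H1 => x0 xs.
  by rewrite x0 /= (leq_trans xs) //= subSn.
case: s => [//|t u]; case E: popk => [t'|] //= [<-].
case: p => [//|x p] /= /andP [xs]. rewrite xs /=.
case: ((size u).+1 - x) => [|d] /=; last by [].
exact: IH E.
Qed.

Definition hp (k r : nat) (T p : seq nat) : seq nat :=
  if take (k - r).+1 p == take (k - r).+1 T
  then set_nth 0 p (k - r) (nth 0 p (k - r)).-1 else p.

Lemma pushk_le (G : Type) r (g : G) k (s s' : stk G k) :
  pushk r g s = Some s' -> 0 < r <= k.
Proof.
elim: k s s' => [//|k IH] [//|t u] s' /=.
case: eqP => [-> _|_]; first by rewrite ltnS leqnn.
have := IH t. case: (pushk r g t) => [t'|] //= H _.
by case/andP: (H _ erefl) => -> /= /leqW.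
Qed.

Lemma toppos_push (G : Type) r (g : G) k (s s' : stk G k) :
  pushk r g s = Some s' ->
  toppos s' = set_nth 0 (toppos s) (k - r) (nth 0 (toppos s) (k - r)).+1.
Proof.
elim: k s s' => [//|k IH] [//|t u] s' /=.
case: eqP => [-> [<-]|ne]; first by rewrite subnn /= toppos_settop.
case E: (pushk r g t) => [t'|] //= [<-] /=.
have /andP [r0 rk] := pushk_le E.
by rewrite subSn //= (IH _ _ E).
Qed.

Lemma vpos_push (G : Type) r (g : G) k (s s' : stk G k) p :
  pushk r g s = Some s' -> vpos s' p -> vpos s (hp k r (toppos s') p).
Proof.
elim: k s s' p => [//|k IH] [//|t u] s' p /=.
case: eqP => [-> [<-]|ne].
  rewrite /hp subnn /=. case: p => [//|x p] /= /andP [H1 H]; case/andP: H1 => x0 xs.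
  rewrite !take0.
  case: eqP => [[Ex]|Nx] /=.
    move: H; rewrite Ex subnn /= vpos_settop => H.
    by rewrite ltnSn subnn /=.
  have Nx' : x != (size u).+2 by apply/eqP => E; apply: Nx; rewrite E.
  have xs' : x <= (size u).+1 by rewrite -ltnS ltn_neqAle Nx' xs.
  rewrite x0 xs' /=. by move: H; rewrite subSn.
have Hle := @pushk_le G r g k t.
have := IH t. case: (pushk r g t) Hle => [t'|] //= Hle IH' [<-] /=.
have /andP [r0 rk] := Hle _ erefl.
case: p => [//|x p] /= /andP [xs H].
rewrite /hp subSn //= eqseq_cons.
case: eqP => [Ex|Nx] /=.
  move: H; rewrite Ex subnn /= => H.
  idtac. have := IH' t' p erefl H; rewrite /hp.
  by case: ifP => _ Hv /=; rewrite leqnn subnn /=.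
have xu : x <= size u by rewrite -ltnS ltn_neqAle (andP xs).2 andbT; apply/eqP.
by rewrite xs; move: H; rewrite subSn.
Qed.

Lemma take_set_lt (T : Type) (x0 : T) (s : seq T) m j y :
  j < m -> take m (set_nth x0 s j y) = set_nth x0 (take m s) j y.
Proof.
elim: s m j => [|a s IH] [|m] [|j] //=.
- move=> H. rewrite take_oversize //. rewrite size_ncons /= addn1 //.
- by move=> H; rewrite IH.
Qed.

Lemma take_set_ge (T : Type) (x0 : T) (s : seq T) m j y :
  m <= j -> m <= size s -> take m (set_nth x0 s j y) = take m s.
Proof.
elim: s m j => [|a s IH] [|m] [|j] //= H1 H2.
by rewrite IH.
Qed.

Lemma take_eq_cases (T : Type) (p q : seq T) m :
  take m p = take m q -> p = q \/ (m <= size p /\ m <= size q).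
Proof.
move=> E.
case: (leqP m (size p)) => hp; case: (leqP m (size q)) => hq.
- by right.
- have := congr1 size E. rewrite (size_takel hp) (take_oversize (ltnW hq)) => H.
  by rewrite -H ltnn in hq.
- have := congr1 size E. rewrite (size_takel hq) (take_oversize (ltnW hp)) => H.
  by rewrite H ltnn in hp.
- left; move: E; by rewrite !take_oversize // ltnW.
Qed.

Lemma upd_take (j : nat) (T p q : seq nat) m :
  take m p = take m q ->
  take m (if take j.+1 p == take j.+1 T then set_nth 0 p j (nth 0 p j).-1 else p) =
  take m (if take j.+1 q == take j.+1 T then set_nth 0 q j (nth 0 q j).-1 else q).
Proof.
move=> E; case: (take_eq_cases E) => [-> //|[sp sq]].
case: (ltnP j m) => jm.
  have E1 : take j.+1 p = take j.+1 q.
    by rewrite -(take_takel p jm) -(take_takel q jm) E.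
  rewrite E1; case: ifP => _ //.
  rewrite !take_set_lt // E. congr set_nth. congr predn.
  by rewrite -(nth_take 0 jm) E nth_take.
by case: ifP => _; case: ifP => _; rewrite ?take_set_ge.
Qed.

Lemma hist_step_take n (Q G A : finType) (delta : Q -> G -> transition n Q G A)
  (c c' : config n Q G) p q m :
  take m p = take m q -> take m (hist_step delta c c' p) = take m (hist_step delta c c' q).
Proof.
move=> E; rewrite /hist_step.
case: (top0 c.2) => [g0|//]; case: (delta c.1 g0) => [//|q0 [//|i g]].
have ilt := ltn_ord i.
rewrite -(subnSK ilt). exact: upd_take.
Qed.

Lemma hist_step_cases n (Q G A : finType) (delta : Q -> G -> transition n Q G A)
  (c c' : config n Q G) p :
  hist_step delta c c' p = p \/
  exists g0 q (i : 'I_n) g, top0 c.2 = Some g0 /\ delta c.1 g0 = DoOp A q (Push i g) /\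
    take (n - i) p = take (n - i) (toppos c'.2) /\
    hist_step delta c c' p = set_nth 0 p (n - i.+1) (nth 0 p (n - i.+1)).-1.
Proof.
rewrite /hist_step.
case E1: (top0 c.2) => [g0|]; last by left.
case E2: (delta c.1 g0) => [f|q0 [i|i g]]; try by left.
case: eqP => H; last by left.
right; by exists g0, q0, i, g.
Qed.

Lemma hist_step_valid n (Q G A : finType) (delta : Q -> G -> transition n Q G A)
  (c c' : config n Q G) l p :
  step delta c c' l -> vpos c'.2 p -> vpos c.2 (hist_step delta c c' p).
Proof.
rewrite /step /hist_step.
case: (top0 c.2) => [g0|//]; case: (delta c.1 g0) => [f|q0 [i|i g]].
- by case=> a [_ ->].
- case=> _ [_ E]. exact: vpos_pop E.
- case=> _ [_ E] V. have := vpos_push E V. rewrite /hp.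
  by rewrite (subnSK (ltn_ord i)).
Qed.

Lemma hist_comp n (Q G A : finType) (delta : Q -> G -> transition n Q G A)
  (R : nat -> config n Q G) i d1 d2 p :
  hist delta R i (d1 + d2) p = hist delta R i d1 (hist delta R (i + d1) d2 p).
Proof.
elim: d2 p => [|d IH] p; first by rewrite addn0.
rewrite addnS /= IH. by rewrite !addnS !addnA.
Qed.

Lemma hist_shift n (Q G A : finType) (delta : Q -> G -> transition n Q G A)
  (R : nat -> config n Q G) i d e p :
  hist delta (fun t => R (i + t)) d e p = hist delta R (i + d) e p.
Proof.
elim: e p => [//|e IH] p /=. by rewrite IH !addnA.
Qed.

Lemma hist_take n (Q G A : finType) (delta : Q -> G -> transition n Q G A)
  (R : nat -> config n Q G) i d p q m :
  take m p = take m q -> take m (hist delta R i d p) = take m (hist delta R i d q).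
Proof.
elim: d p q => [//|d IH] p q E /=. apply: IH. exact: hist_step_take.
Qed.

Lemma hist_valid n (Q G A : finType) (star : A) (delta : Q -> G -> transition n Q G A)
  (R : nat -> config n Q G) (hR : star_run star delta R) d i p :
  vpos (R (i + d)).2 p -> vpos (R i).2 (hist delta R i d p).
Proof.
elim: d p => [|d IH] p; first by rewrite addn0.
move=> V /=; apply: IH.
have [_ [l [S _]]] := hR (i + d).
rewrite addnS in V *. exact: hist_step_valid S V.
Qed.

Definition anc n (Q G A : finType) (delta : Q -> G -> transition n Q G A)
  (R : nat -> config n Q G) i j := hist delta R i (j - i) (toppos (R j).2).

Definition upk n (Q G A : finType) (delta : Q -> G -> transition n Q G A)
  (R : nat -> config n Q G) m i j :=
  i <= j /\ take m (anc delta R i j) = take m (toppos (R i).2).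

Lemma anc_comp n (Q G A : finType) (delta : Q -> G -> transition n Q G A)
  (R : nat -> config n Q G) i l j :
  i <= l -> l <= j -> anc delta R i j = hist delta R i (l - i) (anc delta R l j).
Proof.
move=> il lj; rewrite /anc -{2}(subnKC il) -hist_comp.
by rewrite [X in _ = hist _ _ _ X _]addnC addnBA // subnK.
Qed.

Lemma anc_step n (Q G A : finType) (delta : Q -> G -> transition n Q G A)
  (R : nat -> config n Q G) i j :
  i < j -> anc delta R i j = hist_step delta (R i) (R i.+1) (anc delta R i.+1 j).
Proof.
move=> ij; rewrite (anc_comp _ _ (leqnSn i) ij) subSnn /=.
by rewrite addn0 addn1.
Qed.

Lemma anc_refl n (Q G A : finType) (delta : Q -> G -> transition n Q G A)
  (R : nat -> config n Q G) i : anc delta R i i = toppos (R i).2.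
Proof. by rewrite /anc subnn. Qed.

Lemma upk_trans n (Q G A : finType) (delta : Q -> G -> transition n Q G A)
  (R : nat -> config n Q G) m i l j :
  upk delta R m i l -> upk delta R m l j -> upk delta R m i j.
Proof.
move=> [il E1] [lj E2]; split; first exact: leq_trans lj.
rewrite (anc_comp _ _ il lj) -E1 /anc. exact: hist_take.
Qed.

Lemma upk_noncross n (Q G A : finType) (delta : Q -> G -> transition n Q G A)
  (R : nat -> config n Q G) m i l j :
  upk delta R m i j -> upk delta R m l j -> i <= l -> upk delta R m i l.
Proof.
move=> [ij E1] [lj E2] il; split => //.
rewrite -E1 (anc_comp _ _ il lj) /anc. symmetry. exact: hist_take.
Qed.

Lemma anc_valid n (Q G A : finType) (star : A) (delta : Q -> G -> transition n Q G A)
  (R : nat -> config n Q G) (hR : star_run star delta R) i j :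
  i <= j -> vpos (R i).2 (anc delta R i j).
Proof.
move=> ij; apply: (hist_valid hR). rewrite subnKC //.
apply: vpos_top. by have [V _] := hR j.
Qed.

Lemma claimQ n (Q G A : finType) (star : A) (delta : Q -> G -> transition n Q G A)
  (R : nat -> config n Q G) (hR : star_run star delta R) m t' :
  m < n -> forall d u, u + d = t' ->
  exists w, [/\ u <= w, w <= t', upk delta R m w t' &
             nth 0 (anc delta R u t') m = nth 0 (toppos (R w).2) m].
Proof.
move=> mn; elim=> [|d IH] u.
  rewrite addn0 => <-; exists u; split => //; first by split; rewrite ?anc_refl.
  by rewrite anc_refl.
rewrite addnS -addSn => /IH [w [uw wt U E]].
have ut : u < t' by apply: leq_trans uw wt.
rewrite (anc_step _ _ ut).
case: (hist_step_cases delta (R u) (R u.+1) (anc delta R u.+1 t')) => [-> | [g0 [q [i [g [E1 [E2 [E3 E4]]]]]]]].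
  by exists w; split => //; apply: ltnW.
rewrite E4 nth_set_nth /=.
case: eqP => [Em|_]; last by exists w; split => //; apply: ltnW.
have [_ [l [S _]]] := hR u.
move: S; rewrite /step E1 E2 => -[_ [_ Ep]].
have TP := toppos_push Ep.
set p := anc delta R u.+1 t' in E3 E4 *.
set T := toppos (R u).2 in TP *.
have ilt := ltn_ord i.
have nim : n - i = m.+1 by rewrite Em subnSK.
rewrite nim in E3. rewrite -Em in TP.
have sT : size T = n by rewrite /T size_toppos.
have sT' : size (toppos (R u.+1).2) = n by rewrite size_toppos.
have sp : m < size p.
  have H : size (take m.+1 p) = m.+1 by rewrite E3 size_takel // sT'.
  rewrite ltnNge; apply/negP => Hle.
  move: H; rewrite take_oversize ?(leq_trans Hle) // => H.
  by move: Hle; rewrite H ltnn.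
have Np : nth 0 p m = (nth 0 T m).+1.
  by rewrite -(nth_take 0 (ltnSn m)) E3 nth_take // TP nth_set_nth /= eqxx.
have Tp : take m p = take m T.
  rewrite -(take_takel p (leqnSn m)) E3 take_takel // TP take_set_ge // sT.
  exact: ltnW.
exists u; split.
- by [].
- exact: ltnW.
- split; first exact: ltnW.
  rewrite (anc_step _ _ ut) -/p E4 -Em take_set_ge //; exact: ltnW.
- by rewrite -Em Np.
Qed.

Lemma lemA n (Q G A : finType) (star : A) (delta : Q -> G -> transition n Q G A)
  (R : nat -> config n Q G) (hR : star_run star delta R) m t t' :
  m < n -> upk delta R m t t' ->
  (forall w, t <= w -> w <= t' -> upk delta R m w t' ->
     nth 0 (toppos (R t).2) m <= nth 0 (toppos (R w).2) m) ->
  upk delta R m.+1 t t'.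
Proof.
move=> mn [tt' Tk] H.
have [w [tw wt U E]] := claimQ hR mn (subnKC tt').
have V := anc_valid hR tt'.
have B := vpos_bound V Tk.
have Hw := H w tw wt U. rewrite -E in Hw.
have Eq : nth 0 (anc delta R t t') m = nth 0 (toppos (R t).2) m.
  by apply/eqP; rewrite eqn_leq B Hw.
split => //.
rewrite (take_nth 0 (s := anc delta R t t')); last by rewrite (vpos_size V).
rewrite (take_nth 0 (s := toppos (R t).2)); last by rewrite size_toppos.
by rewrite Tk Eq.
Qed.

Lemma ex_min_f (P : nat -> Prop) (f : nat -> nat) :
  (exists x, P x) -> exists x, P x /\ forall y, P y -> f x <= f y.
Proof.
move=> [x Px].
suff: forall v x, P x -> f x <= v -> exists x, P x /\ forall y, P y -> f x <= f y.
  by move=> /(_ (f x) x Px (leqnn _)).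
elim=> [|v IH] {}x {}Px.
  rewrite leqn0 => /eqP fx; exists x; split => // y _. by rewrite fx.
move=> fx.
case: (classic (exists y, P y /\ f y < f x)) => [[y [Py lt]]|NE].
  apply: (IH y Py). by rewrite -ltnS (leq_trans lt).
exists x; split => // y Py. rewrite leqNgt; apply/negP => lt. apply: NE; by exists y.
Qed.

Definition infinite_p (I : nat -> Prop) := forall N, exists i, N <= i /\ I i.

Definition pw n (Q G A : finType) (delta : Q -> G -> transition n Q G A)
  (R : nat -> config n Q G) m (I : nat -> Prop) :=
  forall i j, I i -> I j -> i <= j -> upk delta R m i j.

Lemma lemL n (Q G A : finType) (star : A) (delta : Q -> G -> transition n Q G A)
  (R : nat -> config n Q G) (hR : star_run star delta R) m (I : nat -> Prop) :
  m < n -> infinite_p I -> pw delta R m I ->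
  exists J, infinite_p J /\ pw delta R m.+1 J.
Proof.
move=> mn infI pwI.
pose Is w := exists b, I b /\ upk delta R m w b.
have pwIs : pw delta R m Is.
  move=> w w' [b [Ib Ub]] [b' [Ib' Ub']] ww'.
  case: (leqP b b') => bb'.
    apply: (upk_noncross _ Ub') ww'. apply: upk_trans Ub (pwI _ _ Ib Ib' bb').
  apply: (upk_noncross Ub) ww'. apply: upk_trans Ub' (pwI _ _ Ib' Ib (ltnW bb')).
pose H t := nth 0 (toppos (R t).2) m.
exists (fun t => Is t /\ forall w, Is w -> t <= w -> H t <= H w).
split.
  move=> N. have [b [Nb Ib]] := infI N.
  have Isb : Is b by exists b; split => //; split; rewrite ?anc_refl.
  have [t [[Nt Ist] Ht]] := ex_min_f H (P := fun t => N <= t /\ Is t)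
     (ex_intro _ b (conj Nb Isb)).
  exists t; split => //; split => // w Isw tw.
  apply: Ht; split => //; exact: leq_trans tw.
move=> t t' [Ist Ht] [Ist' Ht'] tt'.
apply: (lemA hR mn (pwIs _ _ Ist Ist' tt')).
move=> w tw wt' Uw. apply: Ht tw.
case: Ist' => b [Ib Ub]. exists b; split => //. exact: upk_trans Uw Ub.
Qed.

Lemma chain n (Q G A : finType) (star : A) (delta : Q -> G -> transition n Q G A)
  (R : nat -> config n Q G) (hR : star_run star delta R) m :
  m <= n -> exists I, infinite_p I /\ pw delta R m I.
Proof.
elim: m => [|m IH] mn.
  exists (fun _ => True); split; first by move=> N; exists N.
  by move=> i j _ _ ij; split; rewrite ?take0.
have [I [infI pwI]] := IH (ltnW mn).
exact: (@lemL n Q G A star delta R hR m I mn infI pwI).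
Qed.
Unset Implicit Arguments.

Theorem mainTheorem15
  (n : nat) (hn : 1 <= n) (Q G A : finType) (star : A)
  (delta : Q -> G -> transition n Q G A)
  (hinj : forall q g f, delta q g = Read n G f -> injective f)
  (R : nat -> config n Q G)
  (hR : star_run star delta R) :
  forall m, exists i, m <= i /\ milestone star delta (R i).
Proof.
have [I [infI pwI]] := chain hR (leqnn n).
move=> N; have [i [Ni Ii]] := infI N.
exists i; split => //.
exists (fun t => R (i + t)); split; first by rewrite addn0.
split.
  move=> t /=. have := hR (i + t). by rewrite addnS.
exists (fun d => I (i + d)); split; last split.
- move=> M. have [j [Mj Ij]] := infI (i + M).
  have ij : i <= j by apply: leq_trans Mj; apply: leq_addr.
  exists (j - i); split; first by rewrite leq_subRL.
  by rewrite subnKC.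
- by rewrite addn0.
- move=> d d' Id Id' dd'.
  have dd2 : i + d <= i + d' by rewrite leq_add2l.
  have [_ U] := pwI _ _ Id Id' dd2.
  rewrite /upper0 hist_shift.
  move: U; rewrite /anc subnDl.
  have V := anc_valid hR dd2. rewrite /anc subnDl in V.
  rewrite !take_oversize //; first by rewrite size_toppos.
  by rewrite (vpos_size V).
Qed.
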